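(* Let $r = pq$ with integers $p, q > 1$, and let $M$ be an $r \times r$ binary circulant matrix (over $\mathbb{F}_2$) with first row $\mathbf{c} = (c_0, c_1, \ldots, c_{r-1})$. Let $k$ be an integer. (1) If $c_{(k+pi) \bmod r} = 1$ for $i = 0, 1, \ldots, q-1$ and all other entries of $\mathbf{c}$ are $0$, then $\operatorname{rank}(M) = p$. (2) If $c_{(k+i) \bmod r} = 1$ for $i = 0, 1, \ldots, p-1$ and all other entries of $\mathbf{c}$ are $0$, then $\operatorname{rank}(M) = r - p + 1$. Here rank is taken over $\mathbb{F}_2$.
   Context: An $r\times r$ circulant matrix is one in which each row is the cyclic right shift by one position of the row above it; it is determined by its first row. *)

(* Defs.v *)
From mathcomp Require Import all_boot all_order all_algebra.
Set Implicit Arguments. Unset Strict Implicit. Unset Printing Implicit Defensive.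
Import GRing.Theory.
Local Open Scope ring_scope.

Definition circ_idx (n : nat) (i j : 'I_n) : 'I_n :=
  Ordinal (ltn_pmod (j + n - i)%N (leq_ltn_trans (leq0n i) (ltn_ord i))).

(* The n x n circulant matrix with first row c: each row is the cyclic right
   shift by one of the row above, i.e. M i j = c_{(j - i) mod n}. *)
Definition circulant (F : Type) (n : nat) (c : 'I_n -> F) : 'M[F]_n :=
  \matrix_(i, j) c (circ_idx i j).

(* Main.v *)
Require Import Defs.
From mathcomp Require Import all_boot all_order all_algebra.
From mathcomp Require Import zify.
Import GRing.Theory Num.Theory.
Local Open Scope ring_scope.

Lemma rank_trig_lb (F : fieldType) r s m (M : 'M[F]_(r, s))
  (f : 'I_m -> 'I_r) (g : 'I_m -> 'I_s) :
  (forall a, M (f a) (g a) = 1) ->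
  (forall a b : 'I_m, (a < b)%N -> M (f a) (g b) = 0) ->
  (m <= \rank M)%N.
Proof.
move=> H1 H2.
have S : \rank (mxsub f g M) = m.
  apply: mxrank_unit; rewrite unitmxE det_trig; last first.
    by apply/is_trig_mxP => a b ab; rewrite mxE; exact: H2.
  rewrite (eq_bigr (fun _ => 1)) ?prodr_const ?expr1n ?unitr1 // => a _.
  by rewrite mxE H1.
rewrite -S -[M]mulmx1 mxsub_mul.
apply: leq_trans (mxrankM_maxl _ _) _.
rewrite mulmx1 rowsubE; exact: mxrankM_maxr.
Qed.

Lemma rank_ker_ub (F : fieldType) r s t (M : 'M[F]_(r, s)) (Y : 'M_(s, t)) :
  M *m Y = 0 -> (\rank M + \rank Y <= s)%N.
Proof.
move=> H.
have : (Y^T <= kermx M^T)%MS by apply/sub_kermxP; rewrite -trmx_mul H trmx0.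
move/mxrankS; rewrite mxrank_ker !mxrank_tr.
have := rank_leq_col M; lia.
Qed.

Lemma sum_unique (R : nzRingType) n (P : pred 'I_n) (j0 : 'I_n) :
  P j0 -> (forall j, P j -> j = j0) -> \sum_j (P j)%:R = 1 :> R.
Proof.
move=> Pj0 U; rewrite (bigD1 j0) //= big1 ?addr0; first by rewrite Pj0.
move=> j nj.

case: (boolP (P j)) => [/U ej | //].
by rewrite ej eqxx in nj.
Qed.

Lemma circZ n (i j : 'I_n) :
  ((circ_idx i j : nat)%:Z = (j%:Z - i%:Z) %% n%:Z)%Z.
Proof.
rewrite /circ_idx /= -modz_nat.
have -> : ((j + n - i)%N : int) = (j%:Z - i%:Z) + n%:Z by have := ltn_ord i; lia.
by rewrite modzDr.
Qed.

Lemma modz_dvdm (d n m : int) : (d %| n)%Z -> modz (modz m n) d = modz m d.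
Proof.
case/dvdzP => e ->.
by rewrite {2}(divz_eq m (e * d)) mulrA modzMDl.
Qed.

Lemma ndvd_small (p : nat) (x : int) : 0 < x < p%:Z -> ~~ (p%:Z %| x)%Z.
Proof.
move=> hx; apply/negP => /dvdz_mod0P; rewrite modz_small; lia.
Qed.

Lemma pdvdn (p q : nat) : (p%:Z %| (p * q)%N%:Z)%Z.
Proof. by rewrite PoszM dvdz_mulr. Qed.

Lemma claim1 p q (hp : (0 < p)%N) (hq : (0 < q)%N) (k : int) (j : 'I_(p * q)) :
  [exists i : 'I_q, (j%:Z == (k + (p * i)%:Z) %% (p * q)%:Z)%Z]
  = (p%:Z %| j%:Z - k)%Z.
Proof.
apply/existsP/idP.
  case=> i /eqP ->; apply/dvdz_mod0P.
  rewrite -modzDml modz_dvdm ?pdvdn // modzDml addrAC subrr add0r.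
  by rewrite PoszM modzMr.
case/dvdzP => m hm.
have h0 : 0 <= modz m q by apply: modz_ge0; lia.
have h1 : modz m q < q by apply: ltz_pmod; lia.
have hi : (`|modz m q| < q)%N by lia.
exists (Ordinal hi); apply/eqP => /=.
have hd := divz_eq m q.
have E : k + (p * `|modz m q|)%N%:Z = j%:Z + (- (m %/ q)%Z) * (p * q)%N%:Z.
  rewrite PoszM; lia.
rewrite E addrC modzMDl modz_small //; have := ltn_ord j; lia.
Qed.

Lemma pleqn (p q : nat) : (0 < q)%N -> (p <= p * q)%N.
Proof. by move=> hq; rewrite leq_pmulr. Qed.

Lemma claim2 p q (hp : (0 < p)%N) (hq : (0 < q)%N) (k : int) (j : 'I_(p * q)) :
  [exists i : 'I_p, (j%:Z == (k + i%:Z) %% (p * q)%:Z)%Z]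
  = (modz (j%:Z - k) (p * q)%N%:Z < p%:Z).
Proof.
have hpn := pleqn p q hq.
apply/existsP/idP.
  case=> i /eqP ->.
  rewrite modzDml addrAC subrr add0r modz_small; have := ltn_ord i; lia.
move=> h.
have h0 : 0 <= modz (j%:Z - k) (p * q)%N%:Z by apply: modz_ge0; lia.
have hi : (`|modz (j%:Z - k) (p * q)%N%:Z| < p)%N by lia.
exists (Ordinal hi); apply/eqP => /=.
have -> : (`|modz (j%:Z - k) (p * q)%N%:Z|%N)%:Z = modz (j%:Z - k) (p * q)%N%:Z by lia.
rewrite modzDmr (addrC k) subrK modz_small //; have := ltn_ord j; lia.
Qed.

Lemma entry1 p q (hp : (0 < p)%N) (hq : (0 < q)%N) (k : int)
  (c : 'I_(p * q) -> 'F_2) :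
  (forall j : 'I_(p * q),
     c j = if [exists i : 'I_q,
                (j%:Z == (k + (p * i)%:Z) %% (p * q)%:Z)%Z]
           then 1 else 0) ->
  forall a b, circulant c a b = (p%:Z %| b%:Z - a%:Z - k)%Z%:R.
Proof.
move=> hc a b; rewrite mxE hc claim1 // circZ.
have -> : (p%:Z %| modz (b%:Z - a%:Z) (p * q)%N%:Z - k)%Z = (p%:Z %| b%:Z - a%:Z - k)%Z.
  apply/dvdz_mod0P/dvdz_mod0P.
    by rewrite -modzDml modz_dvdm ?pdvdn // modzDml.
    by move=> H; rewrite -(modzDml (modz _ _)) modz_dvdm ?pdvdn // modzDml.
by case: ifP.
Qed.

Lemma entry2 p q (hp : (0 < p)%N) (hq : (0 < q)%N) (k : int)
  (c : 'I_(p * q) -> 'F_2) :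
  (forall j : 'I_(p * q),
     c j = if [exists i : 'I_p,
                (j%:Z == (k + i%:Z) %% (p * q)%:Z)%Z]
           then 1 else 0) ->
  forall a b, circulant c a b =
     ((modz (b%:Z - (a%:Z + k)) (p * q)%N%:Z < p%:Z)%R : bool)%:R.
Proof.
move=> hc a b; rewrite mxE hc claim2 // circZ modzDml opprD addrA.
by case: ifP.
Qed.

Lemma part1 p q (hp : (0 < p)%N) (hq : (0 < q)%N) (k : int)
  (c : 'I_(p * q) -> 'F_2) :
  (forall j : 'I_(p * q),
     c j = if [exists i : 'I_q,
                (j%:Z == (k + (p * i)%:Z) %% (p * q)%:Z)%Z]
           then 1 else 0) ->
  \rank (circulant c) = p.
Proof.
move=> hc; have hpn := pleqn p q hq.
pose A : 'M['F_2]_(p * q, p) := \matrix_(i, a) ((a : nat) == (i %% p)%N)%:R.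
pose B : 'M['F_2]_(p, p * q) := \matrix_(a, j) (p%:Z %| j%:Z - a%:Z - k)%Z%:R.
have MAB : circulant c = A *m B.
  apply/matrixP => i j; rewrite (entry1 _ _ hp hq _ _ hc) !mxE (bigD1 (Ordinal (ltn_pmod i hp))) //=.
  rewrite big1.
    rewrite !mxE eqxx mul1r addr0; congr (_%:R).
    have -> : j%:Z - ((i %% p)%N)%:Z - k = (j%:Z - i%:Z - k) + (i %/ p)%N%:Z * p%:Z.
      have := divn_eq i p; lia.
    by rewrite (rpredDr (j%:Z - i%:Z - k)) // dvdz_mull.
  move=> a ha; rewrite !mxE.
  have -> : ((a : nat) == (i %% p)%N) = false.
    apply/negP => /eqP h; move: ha; rewrite -(inj_eq val_inj) /= h eqxx //.
  by rewrite mul0r.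
apply/anti_leq/andP; split.
  rewrite MAB; exact: leq_trans (mxrankM_maxl A B) (rank_leq_col A).
have gb : forall b : 'I_p, (`|modz (b%:Z + k) p%:Z| < p * q)%N.
  move=> b; have h0 : 0 <= modz (b%:Z + k) p%:Z by apply: modz_ge0; lia.
  have h1 : modz (b%:Z + k) p%:Z < p%:Z by apply: ltz_pmod; lia.
  lia.
have key : forall a b : 'I_p, circulant c (widen_ord hpn a) (Ordinal (gb b))
                            = (p%:Z %| b%:Z - a%:Z)%Z%:R.
  move=> a b; rewrite (entry1 _ _ hp hq _ _ hc) /=; congr (_%:R).
  have h0 : 0 <= modz (b%:Z + k) p%:Z by apply: modz_ge0; lia.
  have hd := divz_eq (b%:Z + k) p%:Z.
  have -> : (`|modz (b%:Z + k) p%:Z|%N)%:Z - a%:Z - k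
            = (b%:Z - a%:Z) + (- ((b%:Z + k) %/ p%:Z)%Z) * p%:Z by lia.
  by rewrite (rpredDr (b%:Z - a%:Z)) // dvdz_mull.
apply: (@rank_trig_lb _ _ _ _ _ (fun a => widen_ord hpn a) (fun b => Ordinal (gb b)))...
  by move=> a; rewrite key subrr dvdz0.
move=> a b ab; rewrite key (negPf (@ndvd_small p (b%:Z - a%:Z) _)) //.
have := ltn_ord b; lia.
Qed.

Lemma count_win p q (hp : (0 < p)%N) (hq : (0 < q)%N) (y r : int) :
  \sum_(j < p * q) (((modz (j%:Z - y) (p * q)%N%:Z < p%:Z)%R : bool)%:R
                     * (p%:Z %| j%:Z - r)%Z%:R : 'F_2) = 1.
Proof.
have hpn := pleqn p q hq.
have hn : (0 < p * q)%N by rewrite muln_gt0 hp hq.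
pose s := modz (r - y) p%:Z.
have s0 : 0 <= s by apply: modz_ge0; lia.
have s1 : s < p%:Z by apply: ltz_pmod; lia.
pose X := modz (y + s) (p * q)%N%:Z.
have X0 : 0 <= X by apply: modz_ge0; lia.
have X1 : X < (p * q)%N%:Z by apply: ltz_pmod; lia.
have hj0 : (`|X| < p * q)%N by lia.
rewrite (eq_bigr (fun j : 'I_(p * q) =>
   (((modz (j%:Z - y) (p * q)%N%:Z < p%:Z)%R && (p%:Z %| j%:Z - r)%Z))%:R));
  last by move=> j _; rewrite -natrM mulnb.
apply: (@sum_unique _ _ (fun j : 'I_(p * q) =>
   (((modz (j%:Z - y) (p * q)%N%:Z < p%:Z)%R && (p%:Z %| j%:Z - r)%Z))) (Ordinal hj0)).
  rewrite /=.
  have -> : (`|X|%N)%:Z = X by lia.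
  apply/andP; split.
    rewrite /X modzDml addrAC subrr add0r modz_small //; lia.
  apply/dvdz_mod0P.
  rewrite -(modzDml X) /X modz_dvdm ?pdvdn // modzDml.
  have -> : y + s - r = s + (- (r - y)) by lia.
  by rewrite /s modzDml subrr mod0z.
move=> j /andP [hw hd]; apply: val_inj => /=.
suff : j%:Z = X by lia.
have a1 : modz (modz (j%:Z - y) (p * q)%N%:Z) p%:Z = s.
  rewrite modz_dvdm ?pdvdn //.
  have -> : j%:Z - y = (j%:Z - r) + (r - y) by lia.
  by rewrite -modzDml (dvdz_mod0P hd) add0r.
have a2 : modz (modz (j%:Z - y) (p * q)%N%:Z) p%:Z = modz (j%:Z - y) (p * q)%N%:Z.
  apply: modz_small; apply/andP; split; last by [].
  by apply: modz_ge0; lia.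
have e : modz (j%:Z - y) (p * q)%N%:Z = s by rewrite -a2 a1.
rewrite /X -e modzDmr addrC subrK modz_small //; have := ltn_ord j; lia.
Qed.

Lemma part2 p q (hp : (0 < p)%N) (hq : (0 < q)%N) (k : int)
  (c : 'I_(p * q) -> 'F_2) :
  (forall j : 'I_(p * q),
     c j = if [exists i : 'I_p,
                (j%:Z == (k + i%:Z) %% (p * q)%:Z)%Z]
           then 1 else 0) ->
  \rank (circulant c) = (p * q - p + 1)%N.
Proof.
move=> hc; have hpn := pleqn p q hq.
have hn : (0 < p * q)%N by rewrite muln_gt0 hp hq.
have fa : forall a : 'I_(p * q - p + 1), (a < p * q)%N.
  by move=> a; have := ltn_ord a; lia.
have gb : forall b : 'I_(p * q - p + 1),
    (`|modz (b%:Z + k + p%:Z - 1) (p * q)%N%:Z| < p * q)%N.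
  move=> b.
  have h0 : 0 <= modz (b%:Z + k + p%:Z - 1) (p * q)%N%:Z by apply: modz_ge0; lia.
  have h1 : modz (b%:Z + k + p%:Z - 1) (p * q)%N%:Z < (p * q)%N%:Z by apply: ltz_pmod; lia.
  lia.
have key : forall a b : 'I_(p * q - p + 1),
   circulant c (Ordinal (fa a)) (Ordinal (gb b))
   = ((modz (b%:Z + p%:Z - 1 - a%:Z) (p * q)%N%:Z < p%:Z)%R : bool)%:R.
  move=> a b; rewrite (entry2 _ _ hp hq _ _ hc) /=.
  have h0 : 0 <= modz (b%:Z + k + p%:Z - 1) (p * q)%N%:Z by apply: modz_ge0; lia.
  have -> : (`|modz (b%:Z + k + p%:Z - 1) (p * q)%N%:Z|%N)%:Z
            = modz (b%:Z + k + p%:Z - 1) (p * q)%N%:Z by lia.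
  rewrite modzDml.
  have -> : b%:Z + k + p%:Z - 1 - (a%:Z + k) = b%:Z + p%:Z - 1 - a%:Z by lia.
  by [].
have lb : (p * q - p + 1 <= \rank (circulant c))%N.
  apply: (@rank_trig_lb _ _ _ _ _ (fun a => Ordinal (fa a)) (fun b => Ordinal (gb b))).
    move=> a; rewrite key.
    have -> : a%:Z + p%:Z - 1 - a%:Z = p%:Z - 1 by lia.
    by rewrite modz_small ?ltrBlDr ?ltrDl //; lia.
  move=> a b ab; rewrite key.
  have := ltn_ord b => hb.
  rewrite modz_small; last lia.
  have -> : (b%:Z + p%:Z - 1 - a%:Z < p%:Z)%R = false by lia.
  by [].
pose Y : 'M['F_2]_(p * q, p.-1) := \matrix_(j, t)
   ((p%:Z %| j%:Z - 0)%Z%:R + (p%:Z %| j%:Z - (t.+1)%N%:Z)%Z%:R).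
have MY : circulant c *m Y = 0.
  apply/matrixP => a t; rewrite !mxE.
  under eq_bigr => j _ do rewrite (entry2 _ _ hp hq _ _ hc) !mxE mulrDr.
  rewrite big_split /= !count_win //.
  exact: val_inj.
have ft : forall t : 'I_p.-1, (t.+1 < p * q)%N.
  by move=> t; have := ltn_ord t; lia.
have lY : (p.-1 <= \rank Y)%N.
  apply: (@rank_trig_lb _ _ _ _ _ (fun t => Ordinal (ft t)) id).
    move=> a; rewrite !mxE /= subrr dvdz0.
    rewrite (negPf (@ndvd_small p ((a.+1)%N%:Z - 0) _)) ?add0r //.
    have := ltn_ord a; lia.
  move=> a b ab; rewrite !mxE /=.
  rewrite (negPf (@ndvd_small p ((a.+1)%N%:Z - 0) _)); last by have := ltn_ord a; lia.
  have -> : (a.+1)%N%:Z - (b.+1)%N%:Z = - (b%:Z - a%:Z) by lia.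
  rewrite rpredN (negPf (@ndvd_small p (b%:Z - a%:Z) _)) ?addr0 //.
  have := ltn_ord b; lia.
have := @rank_ker_ub _ _ _ _ _ _ MY.
lia.
Qed.

Theorem theorem3 (p q : nat) (hp : (1 < p)%N) (hq : (1 < q)%N) (k : int) :
  (forall c : 'I_(p * q) -> 'F_2,
     (forall j : 'I_(p * q),
        c j = if [exists i : 'I_q,
                   (j%:Z == (k + (p * i)%:Z) %% (p * q)%:Z)%Z]
              then 1 else 0) ->
     \rank (circulant c) = p)
  /\
  (forall c : 'I_(p * q) -> 'F_2,
     (forall j : 'I_(p * q),
        c j = if [exists i : 'I_p,
                   (j%:Z == (k + i%:Z) %% (p * q)%:Z)%Z]
              then 1 else 0) ->
     \rank (circulant c) = (p * q - p + 1)%N).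
Proof.
have hp0 : (0 < p)%N by lia.
have hq0 : (0 < q)%N by lia.
split=> c hc; [exact: part1 hp0 hq0 k c hc | exact: part2 hp0 hq0 k c hc].
Qed.
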